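(* Let $R \in \mathcal{R}$. Then there exists a nice set $X$ such that $R = X \to \mathcal{N}$, where $X \to \mathcal{N} = \{t \in \mathcal{T} : (t\;\bar{w}) \in \mathcal{N} \text{ for each } \bar{w} \in X\}$.
   Context: With disjoint sets of $\lambda$-variables $x,y,\dots$ and $\mu$-variables $a,b,\dots$, terms and $\mathcal{E}$-terms are $\mathcal{T} ::= x \mid \lambda x.\mathcal{T} \mid (\mathcal{T}\;\mathcal{E}) \mid \langle \mathcal{T},\mathcal{T}\rangle \mid \omega_1\mathcal{T} \mid \omega_2\mathcal{T} \mid \mu a.\mathcal{T} \mid (a\;\mathcal{T})$, $\mathcal{E} ::= \mathcal{T} \mid \pi_1 \mid \pi_2 \mid [x.\mathcal{T}, y.\mathcal{T}]$ (up to renaming of bound variables). The one-step reduction $\triangleright$ is the closure under all constructors of: $(\lambda x.u\;v)\triangleright u[x:=v]$; $(\langle t_1,t_2\rangle\;\pi_i)\triangleright t_i$; $(\omega_i t\;[x_1.u_1,x_2.u_2])\triangleright u_i[x_i:=t]$; $((t\;[x_1.u_1,x_2.u_2])\;\varepsilon)\triangleright(t\;[x_1.(u_1\;\varepsilon),x_2.(u_2\;\varepsilon)])$; $(\mu a.t\;\varepsilon)\triangleright\mu a.t[a:=^*\varepsilon]$, where $t[a:=^*\varepsilon]$ replaces inductively each subterm $(a\;v)$ by $(a\;(v\;\varepsilon))$. $\mathcal{N}$ (resp. $\mathcal{N}'$) is the set of strongly normalizable terms (resp. $\mathcal{E}$-terms), and $\mathcal{N}'^{<\omega}$ the set of finite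 sequences of elements of $\mathcal{N}'$. For $\bar{w}=w_1\dots w_n$ and a term $t$, $(t\;\bar{w})$ is $t$ if $n=0$ and $((t\;w_1)\;w_2\dots w_n)$ otherwise. A sequence $\bar{w}\in\mathcal{N}'^{<\omega}$ is nice iff none of $w_1,\dots,w_{n-1}$ is of the form $[x.u,y.v]$; a set $X\subseteq\mathcal{N}'^{<\omega}$ is nice iff all its elements are nice sequences. For sets $K,L$ of terms: $K\to L=\{t\in\mathcal{T} : (t\;u)\in L \text{ for all } u\in K\}$; $K\wedge L=\{t : (t\;\pi_1)\in K, (t\;\pi_2)\in L\}$; $K\vee L=\{t :$ for all $\lambda$-variables $x,y$ and all $u,v\in\mathcal{N}$, if $u[x:=r]\in\mathcal{N}$ and $v[y:=s]\in\mathcal{N}$ for all $r\in K,s\in L$, then $(t\;[x.u,y.v])\in\mathcal{N}\}$. $\mathcal{R}$ is the smallest set of sets of terms containing $\mathcal{N}$ and closed under $\to,\wedge,\vee$. *)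

(* Defs.v *)
(* Lambda-mu calculus with pairs and sums, de Bruijn indices.
   lambda-variables and mu-variables are two separate de Bruijn index spaces. *)
From Stdlib Require Import List Arith.
Import ListNotations.

Inductive term : Type :=
| Var : nat -> term
| Lam : term -> term
| App : term -> eterm -> term
| Pair : term -> term -> term
| Inj1 : term -> term
| Inj2 : term -> term
| Mu : term -> term
| Named : nat -> term -> term       (* (a t), a a mu-variable *)
with eterm : Type :=
| ETerm : term -> eterm
| Proj1 : eterm
| Proj2 : eterm
| Case : term -> term -> eterm.     (* [x.u, y.v], each branch binds lambda-index 0 *)

Definition upren (xi : nat -> nat) : nat -> nat :=
  fun n => match n with 0 => 0 | S m => S (xi m) end.

Fixpoint ren_l (xi : nat -> nat) (t : term) : term :=
  match t with
  | Var n => Var (xi n)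
  | Lam u => Lam (ren_l (upren xi) u)
  | App u e => App (ren_l xi u) (eren_l xi e)
  | Pair a b => Pair (ren_l xi a) (ren_l xi b)
  | Inj1 u => Inj1 (ren_l xi u)
  | Inj2 u => Inj2 (ren_l xi u)
  | Mu u => Mu (ren_l xi u)
  | Named a u => Named a (ren_l xi u)
  end
with eren_l (xi : nat -> nat) (e : eterm) : eterm :=
  match e with
  | ETerm u => ETerm (ren_l xi u)
  | Proj1 => Proj1
  | Proj2 => Proj2
  | Case u v => Case (ren_l (upren xi) u) (ren_l (upren xi) v)
  end.

Fixpoint ren_m (xi : nat -> nat) (t : term) : term :=
  match t with
  | Var n => Var n
  | Lam u => Lam (ren_m xi u)
  | App u e => App (ren_m xi u) (eren_m xi e)
  | Pair a b => Pair (ren_m xi a) (ren_m xi b)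
  | Inj1 u => Inj1 (ren_m xi u)
  | Inj2 u => Inj2 (ren_m xi u)
  | Mu u => Mu (ren_m (upren xi) u)
  | Named a u => Named (xi a) (ren_m xi u)
  end
with eren_m (xi : nat -> nat) (e : eterm) : eterm :=
  match e with
  | ETerm u => ETerm (ren_m xi u)
  | Proj1 => Proj1
  | Proj2 => Proj2
  | Case u v => Case (ren_m xi u) (ren_m xi v)
  end.

Definition up_l (sigma : nat -> term) : nat -> term :=
  fun n => match n with 0 => Var 0 | S m => ren_l S (sigma m) end.

Definition up_m (sigma : nat -> term) : nat -> term :=
  fun n => ren_m S (sigma n).

Fixpoint subst_l (sigma : nat -> term) (t : term) : term :=
  match t with
  | Var n => sigma n
  | Lam u => Lam (subst_l (up_l sigma) u)
  | App u e => App (subst_l sigma u) (esubst_l sigma e)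
  | Pair a b => Pair (subst_l sigma a) (subst_l sigma b)
  | Inj1 u => Inj1 (subst_l sigma u)
  | Inj2 u => Inj2 (subst_l sigma u)
  | Mu u => Mu (subst_l (up_m sigma) u)
  | Named a u => Named a (subst_l sigma u)
  end
with esubst_l (sigma : nat -> term) (e : eterm) : eterm :=
  match e with
  | ETerm u => ETerm (subst_l sigma u)
  | Proj1 => Proj1
  | Proj2 => Proj2
  | Case u v => Case (subst_l (up_l sigma) u) (subst_l (up_l sigma) v)
  end.

Definition subst0 (u v : term) : term :=
  subst_l (fun n => match n with 0 => v | S m => Var m end) u.

(* t[a:=* e] with a = mu-index k: each (a v) becomes (a (v[a:=*e] e)) *)
Fixpoint msubst (k : nat) (e : eterm) (t : term) : term :=
  match t with
  | Var n => Var n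
  | Lam u => Lam (msubst k (eren_l S e) u)
  | App u e' => App (msubst k e u) (emsubst k e e')
  | Pair a b => Pair (msubst k e a) (msubst k e b)
  | Inj1 u => Inj1 (msubst k e u)
  | Inj2 u => Inj2 (msubst k e u)
  | Mu u => Mu (msubst (S k) (eren_m S e) u)
  | Named a u =>
      if Nat.eqb a k then Named a (App (msubst k e u) e)
      else Named a (msubst k e u)
  end
with emsubst (k : nat) (e : eterm) (e' : eterm) : eterm :=
  match e' with
  | ETerm u => ETerm (msubst k e u)
  | Proj1 => Proj1
  | Proj2 => Proj2
  | Case u v => Case (msubst k (eren_l S e) u) (msubst k (eren_l S e) v)
  end.

Inductive step : term -> term -> Prop :=
| st_beta : forall u v, step (App (Lam u) (ETerm v)) (subst0 u v)
| st_pi1 : forall t1 t2, step (App (Pair t1 t2) Proj1) t1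
| st_pi2 : forall t1 t2, step (App (Pair t1 t2) Proj2) t2
| st_case1 : forall t u1 u2, step (App (Inj1 t) (Case u1 u2)) (subst0 u1 t)
| st_case2 : forall t u1 u2, step (App (Inj2 t) (Case u1 u2)) (subst0 u2 t)
| st_comm : forall t u1 u2 e,
    step (App (App t (Case u1 u2)) e)
         (App t (Case (App u1 (eren_l S e)) (App u2 (eren_l S e))))
| st_mu : forall t e, step (App (Mu t) e) (Mu (msubst 0 (eren_m S e) t))
| st_lam : forall u u', step u u' -> step (Lam u) (Lam u')
| st_appl : forall u u' e, step u u' -> step (App u e) (App u' e)
| st_appr : forall u e e', estep e e' -> step (App u e) (App u e')
| st_pairl : forall a a' b, step a a' -> step (Pair a b) (Pair a' b)
| st_pairr : forall a b b', step b b' -> step (Pair a b) (Pair a b')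
| st_inj1 : forall u u', step u u' -> step (Inj1 u) (Inj1 u')
| st_inj2 : forall u u', step u u' -> step (Inj2 u) (Inj2 u')
| st_mu_c : forall u u', step u u' -> step (Mu u) (Mu u')
| st_named : forall a u u', step u u' -> step (Named a u) (Named a u')
with estep : eterm -> eterm -> Prop :=
| est_term : forall u u', step u u' -> estep (ETerm u) (ETerm u')
| est_casel : forall u u' v, step u u' -> estep (Case u v) (Case u' v)
| est_caser : forall u v v', step v v' -> estep (Case u v) (Case u v').

Definition SN (t : term) : Prop := Acc (fun a b => step b a) t.
Definition ESN (e : eterm) : Prop := Acc (fun a b => estep b a) e.

Definition apps (t : term) (ws : list eterm) : term :=
  fold_left (fun acc w => App acc w) ws t.

Definition is_case (e : eterm) : Prop :=
  match e with Case _ _ => True | _ => False end.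

Definition nice (ws : list eterm) : Prop :=
  Forall ESN ws /\
  forall i, S i < length ws -> ~ is_case (nth i ws Proj1).

Definition nice_set (X : list eterm -> Prop) : Prop :=
  forall ws, X ws -> nice ws.

Definition seq_arrow_N (X : list eterm -> Prop) (t : term) : Prop :=
  forall ws, X ws -> SN (apps t ws).

Definition arrow (K L : term -> Prop) (t : term) : Prop :=
  forall u, K u -> L (App t (ETerm u)).

Definition wedge (K L : term -> Prop) (t : term) : Prop :=
  K (App t Proj1) /\ L (App t Proj2).

(* u, v are branch bodies whose bound lambda-variable is index 0 *)
Definition vee (K L : term -> Prop) (t : term) : Prop :=
  forall u v, SN u -> SN v ->
    (forall r, K r -> SN (subst0 u r)) ->
    (forall s, L s -> SN (subst0 v s)) ->
    SN (App t (Case u v)).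

Inductive inR : (term -> Prop) -> Prop :=
| inR_N : inR SN
| inR_arrow : forall K L, inR K -> inR L -> inR (arrow K L)
| inR_wedge : forall K L, inR K -> inR L -> inR (wedge K L)
| inR_vee : forall K L, inR K -> inR L -> inR (vee K L).

(* Main.v *)
Require Import Defs.
From Stdlib Require Import List Arith Lia.
Import ListNotations.

Inductive neu : term -> Prop :=
| neu_var : forall n, neu (Var n)
| neu_app : forall a w, neu a -> ~ is_case w -> neu (App a w).

Lemma SN_var n : SN (Var n).
Proof. constructor; intros y H; inversion H. Qed.

Lemma ESN_proj1 : ESN Proj1.
Proof. constructor; intros y H; inversion H. Qed.
Lemma ESN_proj2 : ESN Proj2.
Proof. constructor; intros y H; inversion H. Qed.

Lemma ESN_term u : SN u -> ESN (ETerm u).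
Proof.
  induction 1 as [u _ IH]. constructor; intros y H; inversion H; subst; apply IH; auto.
Qed.

Lemma ESN_case u v : SN u -> SN v -> ESN (Case u v).
Proof.
  intros Hu; revert v; induction Hu as [u Hu IHu]; intros v Hv.
  induction Hv as [v Hv IHv].
  constructor; intros y H; inversion H; subst.
  - apply IHu; auto. constructor; auto.
  - apply IHv; auto.
Qed.

Lemma noncase_step w w' : estep w w' -> ~ is_case w -> ~ is_case w'.
Proof. intros H; inversion H; subst; simpl; auto. Qed.

Lemma neu_step a : neu a -> forall a', step a a' -> neu a'.
Proof.
  induction 1 as [n|a w Ha IH Hw]; intros a' H.
  - inversion H.
  - inversion H; subst; try (inversion Ha; fail).
    + inversion Ha; subst. simpl in *; tauto.
    + constructor; auto.
    + constructor; auto. eapply noncase_step; eauto.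
Qed.

Lemma SN_app_neu a : SN a -> neu a -> forall w, ESN w -> SN (App a w).
Proof.
  induction 1 as [a Ha IHa]; intros Hn w Hw.
  induction Hw as [w Hw IHw].
  constructor; intros y H; inversion H; subst; try (inversion Hn; fail).
  - inversion Hn; subst. match goal with Hx : neu (App _ _) |- _ => inversion Hx; subst end. simpl in *; tauto.
  - apply IHa; auto. eapply neu_step; eauto. constructor; auto.
  - apply IHw; auto.
Qed.

Lemma SN_apps_neu l : forall a, neu a -> SN a -> Forall ESN l ->
  (forall x, In x l -> ~ is_case x) -> SN (apps a l).
Proof.
  induction l as [|w l IH]; intros a Hn Hs Hf Hc; simpl; auto.
  inversion Hf; subst.
  apply IH; auto.
  - constructor; auto. apply Hc; simpl; auto.
  - apply SN_app_neu; auto.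
  - intros x Hx; apply Hc; simpl; auto.
Qed.

Lemma var_nice n ws : nice ws -> SN (apps (Var n) ws).
Proof.
  intros [Hf Hc].
  destruct ws as [|w0 ws0] eqn:E; [apply SN_var|].
  rewrite <- E in *.
  assert (Hne : ws <> []) by (rewrite E; discriminate).
  destruct (exists_last Hne) as [l [w Hl]]. rewrite Hl in *.
  unfold apps; rewrite fold_left_app; simpl. fold (apps (Var n) l).
  apply Forall_app in Hf as [Hf1 Hf2]. inversion Hf2; subst.
  assert (Hl' : forall x, In x l -> ~ is_case x).
  { intros x Hx. destruct (In_nth l x Proj1 Hx) as [i [Hi Hx']].
    specialize (Hc i). rewrite app_nth1 in Hc by auto. rewrite Hx' in Hc.
    apply Hc. rewrite length_app; simpl; lia. }
  apply SN_app_neu; auto.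
  - apply SN_apps_neu; auto. constructor. apply SN_var.
  - clear - Hl'. induction l using rev_ind; [constructor|].
    unfold apps; rewrite fold_left_app; simpl. constructor.
    + apply IHl. intros y Hy; apply Hl'; apply in_or_app; auto.
    + apply Hl'; apply in_or_app; simpl; auto.
Qed.

Lemma SN_app_inv t e : SN (App t e) -> SN t.
Proof.
  intros H. remember (App t e) as x. revert t e Heqx.
  induction H as [x Hx IH]; intros t e ->.
  constructor; intros y Hy. eapply IH; [|reflexivity]. apply st_appl; auto.
Qed.

Lemma SN_apps_inv ws : forall t, SN (apps t ws) -> SN t.
Proof.
  induction ws as [|w ws IH]; simpl; auto.
  intros t H. apply IH in H. eapply SN_app_inv; eauto.
Qed.

Lemma main (R : term -> Prop) (HR : inR R) :
  exists X : list eterm -> Prop,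
    nice_set X /\ (exists ws, X ws) /\ (forall t, R t <-> seq_arrow_N X t).
Proof.
  induction HR as [|K L HK [X1 [N1 [[w1 E1] I1]]] HL [X2 [N2 [[w2 E2] I2]]]
                  |K L HK [X1 [N1 [[w1 E1] I1]]] HL [X2 [N2 [[w2 E2] I2]]]
                  |K L HK [X1 [N1 [[w1 E1] I1]]] HL [X2 [N2 [[w2 E2] I2]]]].
  - exists (fun ws => ws = []). split; [|split].
    + intros ws ->. split; [constructor|simpl; intros; lia].
    + exists []; auto.
    + intros t; split; intros H.
      * intros ws ->; exact H.
      * exact (H [] eq_refl).
  - exists (fun ws => exists u w, K u /\ X2 w /\ ws = ETerm u :: w).
    split; [|split].
    + intros ws [u [w [Ku [Xw ->]]]]. destruct (N2 w Xw) as [Hf Hc]. split.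
      * constructor; auto. apply ESN_term.
        apply I1 in Ku. eapply SN_apps_inv. apply (Ku w1 E1).
      * intros [|i] Hi; simpl; auto. apply Hc. simpl in Hi; lia.
    + exists (ETerm (Var 0) :: w2). exists (Var 0), w2. split; auto.
      apply I1. intros ws Hws. apply var_nice; auto.
    + intros t; split.
      * intros H ws [u [w [Ku [Xw ->]]]]. simpl. apply (proj1 (I2 _) (H u Ku)); auto.
      * intros H u Ku. apply I2. intros w Xw. apply (H (ETerm u :: w)).
        exists u, w; auto.
  - exists (fun ws => (exists w, X1 w /\ ws = Proj1 :: w) \/ (exists w, X2 w /\ ws = Proj2 :: w)).
    split; [|split].
    + intros ws [[w [Xw ->]]|[w [Xw ->]]].
      * destruct (N1 w Xw) as [Hf Hc]. split.
        -- constructor; auto. apply ESN_proj1.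
        -- intros [|i] Hi; simpl; auto. apply Hc. simpl in Hi; lia.
      * destruct (N2 w Xw) as [Hf Hc]. split.
        -- constructor; auto. apply ESN_proj2.
        -- intros [|i] Hi; simpl; auto. apply Hc. simpl in Hi; lia.
    + exists (Proj1 :: w1). left; eauto.
    + intros t; split.
      * intros [H1 H2] ws [[w [Xw ->]]|[w [Xw ->]]]; simpl.
        -- apply (proj1 (I1 _) H1); auto.
        -- apply (proj1 (I2 _) H2); auto.
      * intros H; split.
        -- apply I1. intros w Xw. apply (H (Proj1 :: w)). left; eauto.
        -- apply I2. intros w Xw. apply (H (Proj2 :: w)). right; eauto.
  - exists (fun ws => exists u v, SN u /\ SN v /\
        (forall r, K r -> SN (subst0 u r)) /\
        (forall s, L s -> SN (subst0 v s)) /\ ws = [Case u v]).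
    split; [|split].
    + intros ws [u [v [Hu [Hv [_ [_ ->]]]]]]. split.
      * constructor; auto. apply ESN_case; auto.
      * simpl; intros; lia.
    + exists [Case (Var 1) (Var 1)], (Var 1), (Var 1).
      split; [apply SN_var|]. split; [apply SN_var|].
      split; [intros; apply SN_var|]. split; [intros; apply SN_var|]. reflexivity.
    + intros t; split.
      * intros H ws [u [v [Hu [Hv [Hr [Hs ->]]]]]]. simpl. apply H; auto.
      * intros H u v Hu Hv Hr Hs. apply (H [Case u v]).
        exists u, v; auto.
Qed.

Theorem lemma6 (R : term -> Prop) (HR : inR R) :
  exists X : list eterm -> Prop,
    nice_set X /\ (forall t, R t <-> seq_arrow_N X t).
Proof.
  destruct (main R HR) as [X [N [_ I]]]. exists X; auto.
Qed.
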